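(* Let $\mathbf r:[L_1,L_2]\to\mathbb R^4$ be an arc-length parametrized curve with Frenet frame $\{\mathbf T,\mathbf N,\mathbf B_1,\mathbf B_2\}$ and curvatures $k_1,k_2,k_3$ (with $k_1>0$), and let $$\mathbf P(s,t,q)=\mathbf r(s)+u(s,t,q)\mathbf T(s)+v(s,t,q)\mathbf N(s)+w(s,t,q)\mathbf B_1(s)+x(s,t,q)\mathbf B_2(s),$$ $(s,t,q)\in[L_1,L_2]\times[T_1,T_2]\times[Q_1,Q_2]$, with $C^1$ marching-scale functions $u,v,w,x$. Fix $t_0\in[T_1,T_2]$, $q_0\in[Q_1,Q_2]$. Then $\mathbf r$ is an isogeodesic of $\mathbf P$ at $(t_0,q_0)$ (i.e. $\mathbf P(s,t_0,q_0)=\mathbf r(s)$ for all $s$, $\mathbf P$ is regular along $\mathbf r$, and $\mathbf r$ is a geodesic of $\mathbf P$) if and only if for all $s\in[L_1,L_2]$: (i) $u(s,t_0,q_0)=v(s,t_0,q_0)=w(s,t_0,q_0)=x(s,t_0,q_0)=0$; (ii) $\frac{\partial v}{\partial t}\frac{\partial x}{\partial q}-\frac{\partial v}{\partial q}\frac{\partial x}{\partial t}=0$ and $\frac{\partial v}{\partial t}\frac{\partial w}{\partial q}-\frac{\partial v}{\partial q}\frac{\partial w}{\partial t}=0$ at $(s,t_0,q_0)$; (iii) $\frac{\partial w}{\partial t}\frac{\partial x}{\partial q}-\frac{\partial w}{\partial q}\frac{\partial x}{\partial t}\neq 0$ at $(s,t_0,q_0)$. Moreover, given (i) and (iii), condition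 (ii) is equivalent to $\frac{\partial v}{\partial t}(s,t_0,q_0)=\frac{\partial v}{\partial q}(s,t_0,q_0)=0$.
   Context: The Frenet frame of an arc-length curve $\mathbf r$ in $\mathbb R^4$ (assumed smooth enough with $k_1,k_2$ nonvanishing so that the frame is defined) satisfies $\mathbf T=\mathbf r'$, $\mathbf T'=k_1\mathbf N$, $\mathbf N'=-k_1\mathbf T+k_2\mathbf B_1$, $\mathbf B_1'=-k_2\mathbf N+k_3\mathbf B_2$, $\mathbf B_2'=-k_3\mathbf B_1$, and is orthonormal. A hypersurface $\mathbf P(s,t,q)$ is regular at a point if $\partial_s\mathbf P,\partial_t\mathbf P,\partial_q\mathbf P$ are linearly independent there; its normal is the four-dimensional vector product $\partial_s\mathbf P\otimes\partial_t\mathbf P\otimes\partial_q\mathbf P$ (formal determinant with first row $\mathbf e_1,\dots,\mathbf e_4$ and the three vectors' coordinates as remaining rows). A curve $\mathbf r$ lying on $\mathbf P$ with $k_1>0$ is a geodesic of $\mathbf P$ iff its principal normal $\mathbf N$ is parallel to the normal of $\mathbf P$ along the curve. A curve is an isoparametric curve of $\mathbf P$ if $\mathbf r(s)=\mathbf P(s,t_0,q_0)$ for some fixed $t_0,q_0$; an isogeodesic is a curve that is both a geodesic and an isoparametric curve. *)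

(* Defs.v *)
From Stdlib Require Export Reals.
Open Scope R_scope.

Record vec4 := V4 { c1 : R; c2 : R; c3 : R; c4 : R }.

Definition vzero : vec4 := V4 0 0 0 0.
Definition vadd (a b : vec4) : vec4 :=
  V4 (c1 a + c1 b) (c2 a + c2 b) (c3 a + c3 b) (c4 a + c4 b).
Definition vscale (k : R) (a : vec4) : vec4 :=
  V4 (k * c1 a) (k * c2 a) (k * c3 a) (k * c4 a).
Definition vdot (a b : vec4) : R :=
  c1 a * c1 b + c2 a * c2 b + c3 a * c3 b + c4 a * c4 b.

Definition vderiv (f : R -> vec4) (x : R) (l : vec4) : Prop :=
  derivable_pt_lim (fun y => c1 (f y)) x (c1 l) /\
  derivable_pt_lim (fun y => c2 (f y)) x (c2 l) /\
  derivable_pt_lim (fun y => c3 (f y)) x (c3 l) /\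
  derivable_pt_lim (fun y => c4 (f y)) x (c4 l).

Definition det3 (a1 a2 a3 b1 b2 b3 d1 d2 d3 : R) : R :=
  a1 * (b2 * d3 - b3 * d2) - a2 * (b1 * d3 - b3 * d1) + a3 * (b1 * d2 - b2 * d1).

(* four-dimensional vector product a (x) b (x) c : formal 4x4 determinant with
   first row e1..e4, expanded along the first row *)
Definition cross4 (a b d : vec4) : vec4 :=
  V4 (det3 (c2 a) (c3 a) (c4 a) (c2 b) (c3 b) (c4 b) (c2 d) (c3 d) (c4 d))
     (- det3 (c1 a) (c3 a) (c4 a) (c1 b) (c3 b) (c4 b) (c1 d) (c3 d) (c4 d))
     (det3 (c1 a) (c2 a) (c4 a) (c1 b) (c2 b) (c4 b) (c1 d) (c2 d) (c4 d))
     (- det3 (c1 a) (c2 a) (c3 a) (c1 b) (c2 b) (c3 b) (c1 d) (c2 d) (c3 d)).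

Definition lin_indep3 (a b d : vec4) : Prop :=
  forall x y z : R,
    vadd (vscale x a) (vadd (vscale y b) (vscale z d)) = vzero ->
    x = 0 /\ y = 0 /\ z = 0.

Definition parallel (a b : vec4) : Prop :=
  exists x y : R, (x <> 0 \/ y <> 0) /\ vadd (vscale x a) (vscale y b) = vzero.

(* Frenet frame of an arc-length curve on [L1,L2] (functions given on all of R,
   equations required at the points of [L1,L2]) *)
Definition frenet_frame (r T N B1 B2 : R -> vec4) (k1 k2 k3 : R -> R)
  (L1 L2 : R) : Prop :=
  forall s, L1 <= s <= L2 ->
    vderiv r s (T s) /\
    vderiv T s (vscale (k1 s) (N s)) /\
    vderiv N s (vadd (vscale (- k1 s) (T s)) (vscale (k2 s) (B1 s))) /\
    vderiv B1 s (vadd (vscale (- k2 s) (N s)) (vscale (k3 s) (B2 s))) /\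
    vderiv B2 s (vscale (- k3 s) (B1 s)) /\
    vdot (T s) (T s) = 1 /\ vdot (N s) (N s) = 1 /\
    vdot (B1 s) (B1 s) = 1 /\ vdot (B2 s) (B2 s) = 1 /\
    vdot (T s) (N s) = 0 /\ vdot (T s) (B1 s) = 0 /\ vdot (T s) (B2 s) = 0 /\
    vdot (N s) (B1 s) = 0 /\ vdot (N s) (B2 s) = 0 /\ vdot (B1 s) (B2 s) = 0 /\
    0 < k1 s /\ k2 s <> 0.

Definition cont3 (f : R -> R -> R -> R) : Prop :=
  forall s t q eps, 0 < eps -> exists d, 0 < d /\
    forall s' t' q', Rabs (s' - s) < d -> Rabs (t' - t) < d -> Rabs (q' - q) < d ->
      Rabs (f s' t' q' - f s t q) < eps.

Definition C1_with (f fs ft fq : R -> R -> R -> R) : Prop :=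
  (forall s t q,
     derivable_pt_lim (fun s' => f s' t q) s (fs s t q) /\
     derivable_pt_lim (fun t' => f s t' q) t (ft s t q) /\
     derivable_pt_lim (fun q' => f s t q') q (fq s t q)) /\
  cont3 fs /\ cont3 ft /\ cont3 fq.

Definition hyper (r T N B1 B2 : R -> vec4) (u v w x : R -> R -> R -> R)
  (s t q : R) : vec4 :=
  vadd (r s) (vadd (vscale (u s t q) (T s)) (vadd (vscale (v s t q) (N s))
    (vadd (vscale (w s t q) (B1 s)) (vscale (x s t q) (B2 s))))).

Definition partials (P : R -> R -> R -> vec4) (s t q : R) (Ps Pt Pq : vec4) : Prop :=
  vderiv (fun s' => P s' t q) s Ps /\
  vderiv (fun t' => P s t' q) t Pt /\
  vderiv (fun q' => P s t q') q Pq.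

Definition regular_at (P : R -> R -> R -> vec4) (s t q : R) : Prop :=
  exists Ps Pt Pq, partials P s t q Ps Pt Pq /\ lin_indep3 Ps Pt Pq.

Definition normal_at (P : R -> R -> R -> vec4) (s t q : R) (n : vec4) : Prop :=
  exists Ps Pt Pq, partials P s t q Ps Pt Pq /\ n = cross4 Ps Pt Pq.

(* r is an isogeodesic of P at (t0,q0) on [L1,L2]: isoparametric, P regular
   along r, and the principal normal N of r parallel to the normal of P *)
Definition isogeodesic (P : R -> R -> R -> vec4) (r N : R -> vec4)
  (L1 L2 t0 q0 : R) : Prop :=
  forall s, L1 <= s <= L2 ->
    P s t0 q0 = r s /\ regular_at P s t0 q0 /\
    exists n, normal_at P s t0 q0 n /\ parallel (N s) n.

(* Main.v *)
Require Import Defs.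
From Stdlib Require Import Reals Lra Psatz.
Require Import Defs.
Open Scope R_scope.

Definition det4r a11 a12 a13 a14 a21 a22 a23 a24 a31 a32 a33 a34 a41 a42 a43 a44 :=
 a11 * det3 a22 a23 a24 a32 a33 a34 a42 a43 a44 - a12 * det3 a21 a23 a24 a31 a33 a34 a41 a43 a44
 + a13 * det3 a21 a22 a24 a31 a32 a34 a41 a42 a44 - a14 * det3 a21 a22 a23 a31 a32 a33 a41 a42 a43.
Definition D4 (T N B1 B2 : vec4) := det4r (c1 T) (c2 T) (c3 T) (c4 T) (c1 N) (c2 N) (c3 N) (c4 N)
  (c1 B1) (c2 B1) (c3 B1) (c4 B1) (c1 B2) (c2 B2) (c3 B2) (c4 B2).
Definition comb (T N B1 B2 : vec4) a b c d :=
  vadd (vscale a T) (vadd (vscale b N) (vadd (vscale c B1) (vscale d B2))).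
Definition onb (T N B1 B2 : vec4) : Prop :=
  vdot T T = 1 /\ vdot N N = 1 /\ vdot B1 B1 = 1 /\ vdot B2 B2 = 1 /\
  vdot T N = 0 /\ vdot T B1 = 0 /\ vdot T B2 = 0 /\
  vdot N B1 = 0 /\ vdot N B2 = 0 /\ vdot B1 B2 = 0.

Lemma vec4_eq a b : c1 a = c1 b -> c2 a = c2 b -> c3 a = c3 b -> c4 a = c4 b -> a = b.
Proof. destruct a, b; simpl; intros; subst; reflexivity. Qed.
Lemma vdot_add_l a b c : vdot (vadd a b) c = vdot a c + vdot b c.
Proof. destruct a, b, c; unfold vdot; simpl; ring. Qed.
Lemma vdot_scale_l k a c : vdot (vscale k a) c = k * vdot a c.
Proof. destruct a, c; unfold vdot; simpl; ring. Qed.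
Lemma vdot_zero_l c : vdot vzero c = 0.
Proof. destruct c; unfold vdot; simpl; ring. Qed.
Lemma vdot_sym a b : vdot a b = vdot b a.
Proof. destruct a, b; unfold vdot; simpl; ring. Qed.
Lemma dot_comb T N B1 B2 a b c d E :
  vdot (comb T N B1 B2 a b c d) E = a * vdot T E + b * vdot N E + c * vdot B1 E + d * vdot B2 E.
Proof. unfold comb. rewrite !vdot_add_l, !vdot_scale_l. ring. Qed.

Lemma gram T N B1 B2 : D4 T N B1 B2 * D4 T N B1 B2 =
  det4r (vdot T T) (vdot T N) (vdot T B1) (vdot T B2) (vdot N T) (vdot N N) (vdot N B1) (vdot N B2)
   (vdot B1 T) (vdot B1 N) (vdot B1 B1) (vdot B1 B2) (vdot B2 T) (vdot B2 N) (vdot B2 B1) (vdot B2 B2).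
Proof. destruct T, N, B1, B2. unfold D4, det4r, det3, vdot; simpl. ring. Qed.
Lemma KD T N B1 B2 : vdot (cross4 T N B1) B2 = - D4 T N B1 B2.
Proof. destruct T, N, B1, B2. unfold D4, det4r, cross4, det3, vdot; simpl. ring. Qed.

Ltac onb_rw H T N B1 B2 :=
  let tt := fresh in let nn := fresh in let b1 := fresh in let b2 := fresh in
  let tn := fresh in let tb1 := fresh in let tb2 := fresh in let nb1 := fresh in
  let nb2 := fresh in let b12 := fresh in
  destruct H as (tt & nn & b1 & b2 & tn & tb1 & tb2 & nb1 & nb2 & b12);
  repeat rewrite ?vdot_add_l, ?vdot_scale_l, ?vdot_zero_l, ?dot_comb in *;
  rewrite ?(vdot_sym N T), ?(vdot_sym B1 T), ?(vdot_sym B2 T), ?(vdot_sym B1 N),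
     ?(vdot_sym B2 N), ?(vdot_sym B2 B1) in *;
  rewrite ?tt, ?nn, ?b1, ?b2, ?tn, ?tb1, ?tb2, ?nb1, ?nb2, ?b12 in *.

Lemma K_ne0 T N B1 B2 : onb T N B1 B2 -> vdot (cross4 T N B1) B2 <> 0.
Proof.
  intros H. rewrite KD. assert (D4 T N B1 B2 * D4 T N B1 B2 = 1).
  { rewrite gram. onb_rw H T N B1 B2. unfold det4r, det3; ring. }
  intro E. assert (D4 T N B1 B2 = 0) by lra. rewrite H1 in H0. lra.
Qed.

Lemma cramer1 T N B1 B2 z : c1 z * D4 T N B1 B2 = det4r (vdot T z) (c2 T) (c3 T) (c4 T)
  (vdot N z) (c2 N) (c3 N) (c4 N) (vdot B1 z) (c2 B1) (c3 B1) (c4 B1) (vdot B2 z) (c2 B2) (c3 B2) (c4 B2).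
Proof. destruct T, N, B1, B2, z. unfold D4, det4r, det3, vdot; simpl. ring. Qed.
Lemma cramer2 T N B1 B2 z : c2 z * D4 T N B1 B2 = det4r (c1 T) (vdot T z) (c3 T) (c4 T)
  (c1 N) (vdot N z) (c3 N) (c4 N) (c1 B1) (vdot B1 z) (c3 B1) (c4 B1) (c1 B2) (vdot B2 z) (c3 B2) (c4 B2).
Proof. destruct T, N, B1, B2, z. unfold D4, det4r, det3, vdot; simpl. ring. Qed.
Lemma cramer3 T N B1 B2 z : c3 z * D4 T N B1 B2 = det4r (c1 T) (c2 T) (vdot T z) (c4 T)
  (c1 N) (c2 N) (vdot N z) (c4 N) (c1 B1) (c2 B1) (vdot B1 z) (c4 B1) (c1 B2) (c2 B2) (vdot B2 z) (c4 B2).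
Proof. destruct T, N, B1, B2, z. unfold D4, det4r, det3, vdot; simpl. ring. Qed.
Lemma cramer4 T N B1 B2 z : c4 z * D4 T N B1 B2 = det4r (c1 T) (c2 T) (c3 T) (vdot T z)
  (c1 N) (c2 N) (c3 N) (vdot N z) (c1 B1) (c2 B1) (c3 B1) (vdot B1 z) (c1 B2) (c2 B2) (c3 B2) (vdot B2 z).
Proof. destruct T, N, B1, B2, z. unfold D4, det4r, det3, vdot; simpl. ring. Qed.

Lemma complete T N B1 B2 z : onb T N B1 B2 ->
  vdot z T = 0 -> vdot z N = 0 -> vdot z B1 = 0 -> vdot z B2 = 0 -> z = vzero.
Proof.
  intros H h1 h2 h3 h4.
  assert (HD : D4 T N B1 B2 <> 0). { intro E. apply (K_ne0 _ _ _ _ H). rewrite KD, E. ring. }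
  rewrite (vdot_sym z) in h1, h2, h3, h4.
  apply vec4_eq; simpl.
  - assert (c1 z * D4 T N B1 B2 = 0) by (rewrite cramer1, h1, h2, h3, h4; unfold det4r, det3; ring).
    destruct (Rmult_integral _ _ H0); [auto | contradiction].
  - assert (c2 z * D4 T N B1 B2 = 0) by (rewrite cramer2, h1, h2, h3, h4; unfold det4r, det3; ring).
    destruct (Rmult_integral _ _ H0); [auto | contradiction].
  - assert (c3 z * D4 T N B1 B2 = 0) by (rewrite cramer3, h1, h2, h3, h4; unfold det4r, det3; ring).
    destruct (Rmult_integral _ _ H0); [auto | contradiction].
  - assert (c4 z * D4 T N B1 B2 = 0) by (rewrite cramer4, h1, h2, h3, h4; unfold det4r, det3; ring).
    destruct (Rmult_integral _ _ H0); [auto | contradiction].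
Qed.

Section CD.
Variables (T N B1 B2 : vec4) (ut vt wt xt uq vq wq xq : R).
Let Pt := comb T N B1 B2 ut vt wt xt.
Let Pq := comb T N B1 B2 uq vq wq xq.
Let K := vdot (cross4 T N B1) B2.
Lemma cdT : vdot (cross4 T Pt Pq) T = 0.
Proof. unfold Pt, Pq, comb; destruct T, N, B1, B2; unfold vdot, cross4, det3; simpl; ring. Qed.
Lemma cdN : vdot (cross4 T Pt Pq) N = (wt*xq - xt*wq) * K.
Proof. unfold K, Pt, Pq, comb; destruct T, N, B1, B2; unfold vdot, cross4, det3; simpl; ring. Qed.
Lemma cdB1 : vdot (cross4 T Pt Pq) B1 = - (vt*xq - xt*vq) * K.
Proof. unfold K, Pt, Pq, comb; destruct T, N, B1, B2; unfold vdot, cross4, det3; simpl; ring. Qed.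
Lemma cdB2 : vdot (cross4 T Pt Pq) B2 = (vt*wq - wt*vq) * K.
Proof. unfold K, Pt, Pq, comb; destruct T, N, B1, B2; unfold vdot, cross4, det3; simpl; ring. Qed.
End CD.

Lemma indep_use T N B1 B2 ut vt wt xt uq vq wq xq be ga :
  lin_indep3 T (comb T N B1 B2 ut vt wt xt) (comb T N B1 B2 uq vq wq xq) ->
  be*vt + ga*vq = 0 -> be*wt + ga*wq = 0 -> be*xt + ga*xq = 0 -> be = 0 /\ ga = 0.
Proof.
  intros Hi h1 h2 h3.
  destruct (Hi (-(be*ut + ga*uq)) be ga) as (_ & ? & ?); [| auto].
  apply vec4_eq; unfold comb; simpl.
  - replace (_ + _) with ((be*vt + ga*vq) * c1 N + (be*wt + ga*wq) * c1 B1 + (be*xt + ga*xq) * c1 B2) by ring.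
    rewrite h1, h2, h3; ring.
  - replace (_ + _) with ((be*vt + ga*vq) * c2 N + (be*wt + ga*wq) * c2 B1 + (be*xt + ga*xq) * c2 B2) by ring.
    rewrite h1, h2, h3; ring.
  - replace (_ + _) with ((be*vt + ga*vq) * c3 N + (be*wt + ga*wq) * c3 B1 + (be*xt + ga*xq) * c3 B2) by ring.
    rewrite h1, h2, h3; ring.
  - replace (_ + _) with ((be*vt + ga*vq) * c4 N + (be*wt + ga*wq) * c4 B1 + (be*xt + ga*xq) * c4 B2) by ring.
    rewrite h1, h2, h3; ring.
Qed.

Lemma core_fwd T N B1 B2 ut vt wt xt uq vq wq xq a b :
  onb T N B1 B2 -> (a <> 0 \/ b <> 0) ->
  vadd (vscale a N) (vscale b (cross4 T (comb T N B1 B2 ut vt wt xt) (comb T N B1 B2 uq vq wq xq))) = vzero ->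
  lin_indep3 T (comb T N B1 B2 ut vt wt xt) (comb T N B1 B2 uq vq wq xq) ->
  (vt * xq - vq * xt = 0 /\ vt * wq - vq * wt = 0) /\ wt * xq - wq * xt <> 0.
Proof.
  intros Ho Hab E Hi.
  pose proof (K_ne0 _ _ _ _ Ho) as HK.
  set (K := vdot (cross4 T N B1) B2) in *.
  pose proof (f_equal (fun z => vdot z N) E) as EN.
  pose proof (f_equal (fun z => vdot z B1) E) as EB1.
  pose proof (f_equal (fun z => vdot z B2) E) as EB2.
  simpl in EN, EB1, EB2.
  rewrite !vdot_add_l, !vdot_scale_l, vdot_zero_l in EN, EB1, EB2.
  rewrite cdN in EN. rewrite cdB1 in EB1. rewrite cdB2 in EB2. fold K in EN, EB1, EB2.
  destruct Ho as (tt & nn & b1 & b2 & tn & tb1 & tb2 & nb1 & nb2 & b12).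
  rewrite nn in EN. rewrite nb1 in EB1. rewrite nb2 in EB2.
  assert (Hb : b <> 0). { intro h; subst b. destruct Hab; [|auto]. apply H. lra. }
  assert (h1 : vt*xq - xt*vq = 0).
  { assert (b * K * (vt*xq - xt*vq) = 0) by lra.
    destruct (Rmult_integral _ _ H) as [H1|H1]; [|auto].
    destruct (Rmult_integral _ _ H1); contradiction. }
  assert (h2 : vt*wq - wt*vq = 0).
  { assert (b * K * (vt*wq - wt*vq) = 0) by lra.
    destruct (Rmult_integral _ _ H) as [H1|H1]; [|auto].
    destruct (Rmult_integral _ _ H1); contradiction. }
  split; [split; lra|].
  intro H0.
  destruct (Req_dec vt 0) as [hv|hv]; [destruct (Req_dec wt 0) as [hw|hw];
    [destruct (Req_dec xt 0) as [hx|hx]|]|].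
  - assert (HH : 1 = 0 /\ 0 = 0) by (apply (indep_use _ _ _ _ _ _ _ _ _ _ _ _ _ _ Hi); lra); lra.
  - assert (HH : xq = 0 /\ (-xt) = 0) by (apply (indep_use _ _ _ _ _ _ _ _ _ _ _ _ _ _ Hi); lra); lra.
  - assert (HH : wq = 0 /\ (-wt) = 0) by (apply (indep_use _ _ _ _ _ _ _ _ _ _ _ _ _ _ Hi); lra); lra.
  - assert (HH : vq = 0 /\ (-vt) = 0) by (apply (indep_use _ _ _ _ _ _ _ _ _ _ _ _ _ _ Hi); lra); lra.
Qed.

Lemma core_bwd T N B1 B2 ut wt xt uq wq xq :
  onb T N B1 B2 -> wt * xq - wq * xt <> 0 ->
  lin_indep3 T (comb T N B1 B2 ut 0 wt xt) (comb T N B1 B2 uq 0 wq xq) /\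
  parallel N (cross4 T (comb T N B1 B2 ut 0 wt xt) (comb T N B1 B2 uq 0 wq xq)).
Proof.
  intros Ho HD. split.
  - intros al be ga E.
    pose proof (f_equal (fun z => vdot z T) E) as ET.
    pose proof (f_equal (fun z => vdot z B1) E) as EB1.
    pose proof (f_equal (fun z => vdot z B2) E) as EB2.
    simpl in ET, EB1, EB2. pose proof Ho as Ho'.
    onb_rw Ho T N B1 B2.
    assert (e1 : be*wt + ga*wq = 0) by lra.
    assert (e2 : be*xt + ga*xq = 0) by lra.
    assert (hb : be * (wt * xq - wq * xt) = 0).
    { replace (be * (wt * xq - wq * xt)) with (xq*(be*wt + ga*wq) - wq*(be*xt + ga*xq)) by ring.
      rewrite e1, e2; ring. }
    assert (hg : ga * (wt * xq - wq * xt) = 0).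
    { replace (ga * (wt * xq - wq * xt)) with (wt*(be*xt + ga*xq) - xt*(be*wt + ga*wq)) by ring.
      rewrite e1, e2; ring. }
    destruct (Rmult_integral _ _ hb); [|contradiction].
    destruct (Rmult_integral _ _ hg); [|contradiction].
    subst. split; [lra|split; auto].
  - set (n := cross4 _ _ _).
    exists (vdot n N), (-1). split; [right; lra|].
    apply (complete T N B1 B2); auto;
    pose proof (K_ne0 _ _ _ _ Ho);
    pose proof (cdT T N B1 B2 ut 0 wt xt uq 0 wq xq);
    pose proof (cdB1 T N B1 B2 ut 0 wt xt uq 0 wq xq);
    pose proof (cdB2 T N B1 B2 ut 0 wt xt uq 0 wq xq);
    fold n in H0, H1, H2; onb_rw Ho T N B1 B2; rewrite ?H0, ?H1, ?H2; ring.
Qed.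

Lemma vderiv_ext f x l l' : l = l' -> vderiv f x l -> vderiv f x l'.
Proof. intros; subst; auto. Qed.
Lemma vderiv_add f g x a b : vderiv f x a -> vderiv g x b ->
  vderiv (fun y => vadd (f y) (g y)) x (vadd a b).
Proof.
  intros (h1 & h2 & h3 & h4) (g1 & g2 & g3 & g4).
  repeat split; simpl.
  - exact (derivable_pt_lim_plus (fun y => c1 (f y)) (fun y => c1 (g y)) x _ _ h1 g1).
  - exact (derivable_pt_lim_plus (fun y => c2 (f y)) (fun y => c2 (g y)) x _ _ h2 g2).
  - exact (derivable_pt_lim_plus (fun y => c3 (f y)) (fun y => c3 (g y)) x _ _ h3 g3).
  - exact (derivable_pt_lim_plus (fun y => c4 (f y)) (fun y => c4 (g y)) x _ _ h4 g4).
Qed.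
Lemma vderiv_scale (f : R -> R) V x a W : derivable_pt_lim f x a -> vderiv V x W ->
  vderiv (fun y => vscale (f y) (V y)) x (vadd (vscale a (V x)) (vscale (f x) W)).
Proof.
  intros hf (h1 & h2 & h3 & h4).
  repeat split; simpl.
  - exact (derivable_pt_lim_mult f (fun y => c1 (V y)) x _ _ hf h1).
  - exact (derivable_pt_lim_mult f (fun y => c2 (V y)) x _ _ hf h2).
  - exact (derivable_pt_lim_mult f (fun y => c3 (V y)) x _ _ hf h3).
  - exact (derivable_pt_lim_mult f (fun y => c4 (V y)) x _ _ hf h4).
Qed.
Lemma vderiv_const c x : vderiv (fun _ => c) x vzero.
Proof. repeat split; simpl; apply (derivable_pt_lim_const). Qed.
Lemma vderiv_uniq f x a b : vderiv f x a -> vderiv f x b -> a = b.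
Proof.
  intros (h1 & h2 & h3 & h4) (g1 & g2 & g3 & g4).
  apply vec4_eq; eapply uniqueness_limite; eauto.
Qed.

Lemma zero_on f L1 L2 s l : L1 < L2 -> L1 <= s <= L2 ->
  (forall y, L1 <= y <= L2 -> f y = 0) -> derivable_pt_lim f s l -> l = 0.
Proof.
  intros HL Hs Hf Hd.
  destruct (Req_dec l 0) as [|Hl]; auto. exfalso.
  destruct (Hd (Rabs l) (Rabs_pos_lt _ Hl)) as [del Hdel].
  pose proof (cond_pos del) as Hdp.
  destruct (Rlt_le_dec s L2) as [Hs2|Hs2].
  - set (h := Rmin (del/2) (L2 - s)).
    assert (hp : 0 < h) by (unfold h, Rmin; destruct Rle_dec; lra).
    assert (hle : h <= L2 - s) by (unfold h, Rmin; destruct Rle_dec; lra).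
    assert (hlt : h < del) by (unfold h, Rmin; destruct Rle_dec; lra).
    specialize (Hdel h ltac:(lra) ltac:(rewrite Rabs_right; lra)).
    rewrite (Hf (s+h)) in Hdel by lra. rewrite (Hf s) in Hdel by lra.
    replace ((0 - 0) / h - l) with (- l) in Hdel by (field; lra).
    rewrite Rabs_Ropp in Hdel. lra.
  - set (h := - Rmin (del/2) (s - L1)).
    assert (hp : 0 < -h) by (unfold h, Rmin; destruct Rle_dec; lra).
    assert (hle : -h <= s - L1) by (unfold h, Rmin; destruct Rle_dec; lra).
    assert (hlt : -h < del) by (unfold h, Rmin; destruct Rle_dec; lra).
    specialize (Hdel h ltac:(lra) ltac:(rewrite Rabs_left; lra)).
    rewrite (Hf (s+h)) in Hdel by lra. rewrite (Hf s) in Hdel by lra.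
    replace ((0 - 0) / h - l) with (- l) in Hdel by (field; lra).
    rewrite Rabs_Ropp in Hdel. lra.
Qed.

Lemma Dt_lem (r T N B1 B2 : R -> vec4) (u ut v vt w wt x xt : R -> R -> R -> R) s t0 q0 :
  derivable_pt_lim (fun t' => u s t' q0) t0 (ut s t0 q0) ->
  derivable_pt_lim (fun t' => v s t' q0) t0 (vt s t0 q0) ->
  derivable_pt_lim (fun t' => w s t' q0) t0 (wt s t0 q0) ->
  derivable_pt_lim (fun t' => x s t' q0) t0 (xt s t0 q0) ->
  vderiv (fun t' => hyper r T N B1 B2 u v w x s t' q0) t0
    (comb (T s) (N s) (B1 s) (B2 s) (ut s t0 q0) (vt s t0 q0) (wt s t0 q0) (xt s t0 q0)).
Proof.
  intros du dv dw dx. unfold hyper.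
  eapply vderiv_ext; cycle 1.
  { apply vderiv_add; [apply vderiv_const|].
    apply vderiv_add; [apply vderiv_scale; [exact du | apply vderiv_const]|].
    apply vderiv_add; [apply vderiv_scale; [exact dv | apply vderiv_const]|].
    apply vderiv_add; apply vderiv_scale; [exact dw | apply vderiv_const | exact dx | apply vderiv_const]. }
  apply vec4_eq; unfold comb; simpl; ring.
Qed.

Lemma Dq_lem (r T N B1 B2 : R -> vec4) (u uq v vq w wq x xq : R -> R -> R -> R) s t0 q0 :
  derivable_pt_lim (fun q' => u s t0 q') q0 (uq s t0 q0) ->
  derivable_pt_lim (fun q' => v s t0 q') q0 (vq s t0 q0) ->
  derivable_pt_lim (fun q' => w s t0 q') q0 (wq s t0 q0) ->
  derivable_pt_lim (fun q' => x s t0 q') q0 (xq s t0 q0) ->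
  vderiv (fun q' => hyper r T N B1 B2 u v w x s t0 q') q0
    (comb (T s) (N s) (B1 s) (B2 s) (uq s t0 q0) (vq s t0 q0) (wq s t0 q0) (xq s t0 q0)).
Proof.
  intros du dv dw dx. unfold hyper.
  eapply vderiv_ext; cycle 1.
  { apply vderiv_add; [apply vderiv_const|].
    apply vderiv_add; [apply vderiv_scale; [exact du | apply vderiv_const]|].
    apply vderiv_add; [apply vderiv_scale; [exact dv | apply vderiv_const]|].
    apply vderiv_add; apply vderiv_scale; [exact dw | apply vderiv_const | exact dx | apply vderiv_const]. }
  apply vec4_eq; unfold comb; simpl; ring.
Qed.

Lemma Ds_lem (r T N B1 B2 : R -> vec4) (k1 k2 k3 : R -> R) L1 L2
  (u us v vs w ws x xs : R -> R -> R -> R) s t0 q0 :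
  L1 < L2 -> L1 <= s <= L2 ->
  frenet_frame r T N B1 B2 k1 k2 k3 L1 L2 ->
  (forall s', L1 <= s' <= L2 -> u s' t0 q0 = 0 /\ v s' t0 q0 = 0 /\ w s' t0 q0 = 0 /\ x s' t0 q0 = 0) ->
  derivable_pt_lim (fun s' => u s' t0 q0) s (us s t0 q0) ->
  derivable_pt_lim (fun s' => v s' t0 q0) s (vs s t0 q0) ->
  derivable_pt_lim (fun s' => w s' t0 q0) s (ws s t0 q0) ->
  derivable_pt_lim (fun s' => x s' t0 q0) s (xs s t0 q0) ->
  vderiv (fun s' => hyper r T N B1 B2 u v w x s' t0 q0) s (T s).
Proof.
  intros HL Hs Hfr Hz du dv dw dx.
  destruct (Hfr s Hs) as (dr & dT & dN & dB1 & dB2 & _).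
  assert (zu : us s t0 q0 = 0) by
    (apply (zero_on (fun s' => u s' t0 q0) L1 L2 s); auto; intros y hy; apply (Hz y hy)).
  assert (zv : vs s t0 q0 = 0) by
    (apply (zero_on (fun s' => v s' t0 q0) L1 L2 s); auto; intros y hy; apply (Hz y hy)).
  assert (zw : ws s t0 q0 = 0) by
    (apply (zero_on (fun s' => w s' t0 q0) L1 L2 s); auto; intros y hy; apply (Hz y hy)).
  assert (zx : xs s t0 q0 = 0) by
    (apply (zero_on (fun s' => x s' t0 q0) L1 L2 s); auto; intros y hy; apply (Hz y hy)).
  destruct (Hz s Hs) as (z1 & z2 & z3 & z4).
  unfold hyper.
  eapply vderiv_ext; cycle 1.
  { apply vderiv_add; [exact dr|].
    apply vderiv_add; [apply vderiv_scale; [exact du | exact dT]|].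
    apply vderiv_add; [apply vderiv_scale; [exact dv | exact dN]|].
    apply vderiv_add; apply vderiv_scale; [exact dw | exact dB1 | exact dx | exact dB2]. }
  rewrite zu, zv, zw, zx, z1, z2, z3, z4.
  apply vec4_eq; simpl; ring.
Qed.

Lemma onb_of_frame r T N B1 B2 k1 k2 k3 L1 L2 s :
  frenet_frame r T N B1 B2 k1 k2 k3 L1 L2 -> L1 <= s <= L2 -> onb (T s) (N s) (B1 s) (B2 s).
Proof.
  intros Hf Hs. destruct (Hf s Hs) as (_ & _ & _ & _ & _ & ?&?&?&?&?&?&?&?&?&?&_).
  repeat split; auto.
Qed.

Lemma comb_zero T N B1 B2 a b c d : onb T N B1 B2 -> comb T N B1 B2 a b c d = vzero ->
  a = 0 /\ b = 0 /\ c = 0 /\ d = 0.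
Proof.
  intros Ho E.
  pose proof (f_equal (fun z => vdot z T) E) as ET.
  pose proof (f_equal (fun z => vdot z N) E) as EN.
  pose proof (f_equal (fun z => vdot z B1) E) as EB1.
  pose proof (f_equal (fun z => vdot z B2) E) as EB2.
  simpl in ET, EN, EB1, EB2.
  onb_rw Ho T N B1 B2. lra.
Qed.

Theorem mainTheorem1
  (r T N B1 B2 : R -> vec4) (k1 k2 k3 : R -> R) (L1 L2 T1 T2 Q1 Q2 : R)
  (u us ut uq v vs vt vq w ws wt wq x xs xt xq : R -> R -> R -> R)
  (t0 q0 : R)
  (HL : L1 < L2)
  (Hframe : frenet_frame r T N B1 B2 k1 k2 k3 L1 L2)
  (Hu : C1_with u us ut uq) (Hv : C1_with v vs vt vq)
  (Hw : C1_with w ws wt wq) (Hx : C1_with x xs xt xq)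
  (Ht0 : T1 <= t0 <= T2) (Hq0 : Q1 <= q0 <= Q2) :
  (isogeodesic (hyper r T N B1 B2 u v w x) r N L1 L2 t0 q0 <->
   (forall s, L1 <= s <= L2 ->
      (u s t0 q0 = 0 /\ v s t0 q0 = 0 /\ w s t0 q0 = 0 /\ x s t0 q0 = 0) /\
      (vt s t0 q0 * xq s t0 q0 - vq s t0 q0 * xt s t0 q0 = 0 /\
       vt s t0 q0 * wq s t0 q0 - vq s t0 q0 * wt s t0 q0 = 0) /\
      wt s t0 q0 * xq s t0 q0 - wq s t0 q0 * xt s t0 q0 <> 0)) /\
  (forall s, L1 <= s <= L2 ->
     (u s t0 q0 = 0 /\ v s t0 q0 = 0 /\ w s t0 q0 = 0 /\ x s t0 q0 = 0) ->
     wt s t0 q0 * xq s t0 q0 - wq s t0 q0 * xt s t0 q0 <> 0 ->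
     ((vt s t0 q0 * xq s t0 q0 - vq s t0 q0 * xt s t0 q0 = 0 /\
       vt s t0 q0 * wq s t0 q0 - vq s t0 q0 * wt s t0 q0 = 0) <->
      (vt s t0 q0 = 0 /\ vq s t0 q0 = 0))).
Proof.
  destruct Hu as [Du _]. destruct Hv as [Dv _]. destruct Hw as [Dw _]. destruct Hx as [Dx _].
  assert (Hii : forall s, L1 <= s <= L2 ->
     wt s t0 q0 * xq s t0 q0 - wq s t0 q0 * xt s t0 q0 <> 0 ->
     ((vt s t0 q0 * xq s t0 q0 - vq s t0 q0 * xt s t0 q0 = 0 /\
       vt s t0 q0 * wq s t0 q0 - vq s t0 q0 * wt s t0 q0 = 0) <->
      (vt s t0 q0 = 0 /\ vq s t0 q0 = 0))).
  { intros s _ HD.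
    set (a := vt s t0 q0) in *. set (b := vq s t0 q0) in *.
    set (c := wt s t0 q0) in *. set (d := wq s t0 q0) in *.
    set (e := xt s t0 q0) in *. set (f := xq s t0 q0) in *.
    split.
    - intros [h1 h2].
      assert (ha : a * (c*f - d*e) = 0).
      { replace (a * (c*f - d*e)) with (c*(a*f - b*e) - e*(a*d - b*c)) by ring.
        rewrite h1, h2; ring. }
      assert (hb : b * (c*f - d*e) = 0).
      { replace (b * (c*f - d*e)) with (d*(a*f - b*e) - f*(a*d - b*c)) by ring.
        rewrite h1, h2; ring. }
      destruct (Rmult_integral _ _ ha); [|contradiction].
      destruct (Rmult_integral _ _ hb); [|contradiction]. auto.
    - intros [-> ->]. split; ring. }
  split; [|intros s Hs _; apply Hii; auto].
  split.
  - intros Hiso.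
    assert (Hz : forall s, L1 <= s <= L2 ->
       u s t0 q0 = 0 /\ v s t0 q0 = 0 /\ w s t0 q0 = 0 /\ x s t0 q0 = 0).
    { intros s Hs. destruct (Hiso s Hs) as [HP _].
      apply (comb_zero (T s) (N s) (B1 s) (B2 s)); [eapply onb_of_frame; eauto|].
      unfold hyper in HP. fold (comb (T s) (N s) (B1 s) (B2 s) (u s t0 q0) (v s t0 q0) (w s t0 q0) (x s t0 q0)) in HP.
      set (C := comb _ _ _ _ _ _ _ _) in *.
      pose proof (f_equal c1 HP) as e1. pose proof (f_equal c2 HP) as e2.
      pose proof (f_equal c3 HP) as e3. pose proof (f_equal c4 HP) as e4.
      simpl in e1, e2, e3, e4. apply vec4_eq; simpl; lra. }
    intros s Hs. split; [apply Hz; auto|].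
    destruct (Hiso s Hs) as (_ & (Ps & Pt & Pq & (hs & ht & hq) & Hind) &
       (n & (Ps' & Pt' & Pq' & (hs' & ht' & hq') & Hn) & Hpar)).
    pose proof (Ds_lem r T N B1 B2 k1 k2 k3 L1 L2 u us v vs w ws x xs s t0 q0 HL Hs Hframe Hz
      (proj1 (Du s t0 q0)) (proj1 (Dv s t0 q0)) (proj1 (Dw s t0 q0)) (proj1 (Dx s t0 q0))) as DS.
    pose proof (Dt_lem r T N B1 B2 u ut v vt w wt x xt s t0 q0
      (proj1 (proj2 (Du s t0 q0))) (proj1 (proj2 (Dv s t0 q0)))
      (proj1 (proj2 (Dw s t0 q0))) (proj1 (proj2 (Dx s t0 q0)))) as DT.
    pose proof (Dq_lem r T N B1 B2 u uq v vq w wq x xq s t0 q0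
      (proj2 (proj2 (Du s t0 q0))) (proj2 (proj2 (Dv s t0 q0)))
      (proj2 (proj2 (Dw s t0 q0))) (proj2 (proj2 (Dx s t0 q0)))) as DQ.
    rewrite (vderiv_uniq _ _ _ _ hs DS), (vderiv_uniq _ _ _ _ ht DT), (vderiv_uniq _ _ _ _ hq DQ) in Hind.
    rewrite (vderiv_uniq _ _ _ _ hs' DS), (vderiv_uniq _ _ _ _ ht' DT), (vderiv_uniq _ _ _ _ hq' DQ) in Hn.
    subst n. destruct Hpar as (a & b & Hab & E).
    eapply core_fwd; eauto. eapply onb_of_frame; eauto.
  - intros H.
    assert (Hz : forall s, L1 <= s <= L2 ->
       u s t0 q0 = 0 /\ v s t0 q0 = 0 /\ w s t0 q0 = 0 /\ x s t0 q0 = 0) by (intros; apply H; auto).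
    intros s Hs. destruct (H s Hs) as (Hz0 & H2 & H3).
    destruct (proj1 (Hii s Hs H3) H2) as [ev eq].
    pose proof (Ds_lem r T N B1 B2 k1 k2 k3 L1 L2 u us v vs w ws x xs s t0 q0 HL Hs Hframe Hz
      (proj1 (Du s t0 q0)) (proj1 (Dv s t0 q0)) (proj1 (Dw s t0 q0)) (proj1 (Dx s t0 q0))) as DS.
    pose proof (Dt_lem r T N B1 B2 u ut v vt w wt x xt s t0 q0
      (proj1 (proj2 (Du s t0 q0))) (proj1 (proj2 (Dv s t0 q0)))
      (proj1 (proj2 (Dw s t0 q0))) (proj1 (proj2 (Dx s t0 q0)))) as DT.
    pose proof (Dq_lem r T N B1 B2 u uq v vq w wq x xq s t0 q0
      (proj2 (proj2 (Du s t0 q0))) (proj2 (proj2 (Dv s t0 q0)))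
      (proj2 (proj2 (Dw s t0 q0))) (proj2 (proj2 (Dx s t0 q0)))) as DQ.
    rewrite ev in DT. rewrite eq in DQ.
    destruct (core_bwd (T s) (N s) (B1 s) (B2 s) (ut s t0 q0) (wt s t0 q0) (xt s t0 q0)
       (uq s t0 q0) (wq s t0 q0) (xq s t0 q0) (onb_of_frame _ _ _ _ _ _ _ _ _ _ _ Hframe Hs) H3)
      as [Hind Hpar].
    split; [| split].
    + destruct Hz0 as (z1 & z2 & z3 & z4). unfold hyper. rewrite z1, z2, z3, z4.
      apply vec4_eq; simpl; ring.
    + exists (T s), (comb (T s) (N s) (B1 s) (B2 s) (ut s t0 q0) 0 (wt s t0 q0) (xt s t0 q0)),
        (comb (T s) (N s) (B1 s) (B2 s) (uq s t0 q0) 0 (wq s t0 q0) (xq s t0 q0)).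
      split; [split; [|split]|]; auto.
    + eexists; split; [| exact Hpar].
      exists (T s), (comb (T s) (N s) (B1 s) (B2 s) (ut s t0 q0) 0 (wt s t0 q0) (xt s t0 q0)),
        (comb (T s) (N s) (B1 s) (B2 s) (uq s t0 q0) 0 (wq s t0 q0) (xq s t0 q0)).
      split; [split; [|split]|]; auto.
Qed.
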